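(* Let $\mathcal{R}$ be a field and $(\mathcal{C}^{\bullet},\partial)$ a bigraded cochain complex of $\mathcal{R}$-vector spaces as in the context. Then there are vector space isomorphisms \[ B^{3}(\mathcal{C},\partial)\cong(B^{3}(\mathcal{C},\partial)\cap\mathcal{C}^{3,0})\oplus(\mathcal{B}^{3}_{1}\cap\mathcal{C}^{2,1})\oplus(\mathcal{B}^{3}_{2}\cap\mathcal{C}^{1,2})\oplus B^{3}(\mathcal{C}^{0,\bullet},\partial_{0,1}), \] \[ Z^{3}(\mathcal{C},\partial)\cong Z^{3}(\mathcal{N}_{0},\overline{\partial})\oplus\ker(\varrho_{3})\oplus(\mathcal{Z}^{3}_{2}\cap\mathcal{C}^{1,2})\oplus\mathcal{Z}^{3}_{3}, \] \[ H^{3}(\mathcal{C},\partial)\cong\frac{Z^{3}(\mathcal{N}_{0},\overline{\partial})}{B^{3}(\mathcal{C},\partial)\cap\mathcal{C}^{3,0}}\oplus\frac{\ker(\varrho_{3})}{\mathcal{B}^{3}_{1}\cap\mathcal{C}^{2,1}}\oplus\frac{\mathcal{Z}^{3}_{2}\cap\mathcal{C}^{1,2}}{\mathcal{B}^{3}_{2}\cap\mathcal{C}^{1,2}}\oplus\frac{\mathcal{Z}^{3}_{3}}{B^{3}(\mathcal{C}^{0,\bullet},\partial_{0,1})}. \]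
   Context: Setting: $\mathcal{C}^{k}=\bigoplus_{p+q=k}\mathcal{C}^{p,q}$ with $\mathcal{C}^{p,q}=\{0\}$ if $p<0$ or $q<0$; $\partial$ is linear of degree $1$, $\partial^{2}=0$, $\partial=\partial_{2,-1}+\partial_{1,0}+\partial_{0,1}$ with $\partial_{i,j}(\mathcal{C}^{p,q})\subseteq\mathcal{C}^{p+i,q+j}$. For $\eta\in\mathcal{C}^k$, $\eta_{p,q}$ is its $\mathcal{C}^{p,q}$-component. $G^{q}\mathcal{C}:=\bigoplus_{j\geq q}\mathcal{C}^{i,j}$, $\pi_{q}:\mathcal{C}\to G^{q}\mathcal{C}$ the projection along the bigrading. $(\mathcal{C}^{0,\bullet},\partial_{0,1})$ is a cochain complex. $\mathcal{N}^{p,q}:=\ker(\partial_{0,1}|_{\mathcal{C}^{p,q}})\cap\ker(\partial_{2,-1}|_{\mathcal{C}^{p,q}})$, $\mathcal{N}_{q}:=\bigoplus_{p}\mathcal{N}^{p-q,q}$ (degree-$m$ part $\mathcal{N}^{m-q,q}$), a subcomplex with differential $\overline{\partial}:=\partial|_{\mathcal{N}_q}$. $\mathcal{M}^{k}:=\{\eta\in\mathcal{C}^{k}\mid(\partial\eta)_{i,j}\in B^{k+1}(\mathcal{N}_{j},\overline{\partial})\ \forall\, i+j=k+1\}$; $\mathcal{Z}^{k}_{q}:=\{\pi_{q}(\eta)\mid\eta\in\mathcal{M}^{k},\ \pi_{q}(\partial\eta)=0\}$; $\mathcal{B}^{k}_{q}:=\pi_{q}(B^{k}(\mathcal{C},\partial))$.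 $\mathcal{A}^{k}:=\{\pi_{1}(\eta)\mid\eta\in\mathcal{C}^{k},\ \pi_{1}(\partial\eta)=0\}$, $\mathcal{J}^{k}:=\mathcal{A}^{k}\cap\mathcal{C}^{k-1,1}$. For $\xi\in\mathcal{A}^{k}$ and any $\eta$ with $\pi_{1}\eta=\xi$, $\pi_{1}(\partial\eta)=0$, the class $[\partial_{2,-1}\xi_{k-1,1}+\partial_{1,0}\eta_{k,0}]\in H^{k+1}(\mathcal{N}_{0},\overline\partial)$ depends only on $\xi$, defining the linear map $\rho_{k}:\mathcal{A}^{k}\to H^{k+1}(\mathcal{N}_{0},\overline{\partial})$; $\varrho_{k}:=\rho_{k}|_{\mathcal{J}^{k}}$. *)

(* Defs.v *)
From HB Require Import structures.
From mathcomp Require Import all_boot all_order all_algebra.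
Unset Printing Implicit Defensive.
Import GRing.Theory.
Local Open Scope ring_scope.

(* A bigraded cochain complex: spaces C^{p,q} (p,q >= 0; negative bidegrees
   are zero, hence omitted) and the three linear components of the
   differential.  d21 : C^{p,q+1} -> C^{p+2,q}, d10 : C^{p,q} -> C^{p+1,q},
   d01 : C^{p,q} -> C^{p,q+1}. *)
Record bicx (R : fieldType) := BiCx {
  Cs : nat -> nat -> lmodType R;
  d21 : forall p q, {linear Cs p q.+1 -> Cs p.+2 q};
  d10 : forall p q, {linear Cs p q -> Cs p.+1 q};
  d01 : forall p q, {linear Cs p q -> Cs p q.+1}
}.
Arguments Cs {R}.
Arguments d21 {R}.
Arguments d10 {R}.
Arguments d01 {R}.

Section Defs.
Context {R : fieldType} (K : bicx R).
Local Notation C := (Cs K).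

(* elements of the total space: families of components eta_{p,q} *)
Definition cochain := forall p q : nat, C p q.

Definition czero : cochain := fun p q => 0.
Definition cadd (x y : cochain) : cochain := fun p q => x p q + y p q.
Definition copp (x : cochain) : cochain := fun p q => - x p q.
Definition cscale (a : R) (x : cochain) : cochain := fun p q => a *: x p q.

Definition subsp := cochain -> Prop.
Definition capS (A B : subsp) : subsp := fun x => A x /\ B x.

Definition deg (k : nat) : subsp := fun x => forall p q, p + q <> k -> x p q = 0.
Definition bideg (i j : nat) : subsp :=
  fun x => forall p q, (p, q) <> (i, j) -> x p q = 0.
Definition comp (i j : nat) (x : cochain) : cochain :=
  fun p q => if (p == i) && (q == j) then x p q else 0.
Definition proj (q0 : nat) (x : cochain) : cochain :=
  fun p q => if (q0 <= q)%N then x p q else 0.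

Definition D21 (x : cochain) : cochain := fun p q =>
  match p as p0 return C p0 q with
  | 0 => 0 | 1 => 0 | p'.+2 => d21 K p' q (x p' q.+1) end.
Definition D10 (x : cochain) : cochain := fun p q =>
  match p as p0 return C p0 q with
  | 0 => 0 | p'.+1 => d10 K p' q (x p' q) end.
Definition D01 (x : cochain) : cochain := fun p q =>
  match q as q0 return C p q0 with
  | 0 => 0 | q'.+1 => d01 K p q' (x p q') end.
Definition dtot (x : cochain) : cochain := cadd (D21 x) (cadd (D10 x) (D01 x)).

Definition Zc (k : nat) : subsp := fun x => deg k x /\ dtot x = czero.
Definition Bc (k : nat) : subsp := fun x =>
  match k with 0 => x = czero | k'.+1 => exists y, deg k' y /\ dtot y = x end.

Definition B0 (k : nat) : subsp := fun x =>
  match k with 0 => x = czero | k'.+1 => exists y, bideg 0 k' y /\ D01 y = x end.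

Definition Nsp (p q : nat) : subsp := fun x =>
  bideg p q x /\ D01 x = czero /\ D21 x = czero.
(* Z^m(N_q, dbar), with (N_q)^m = N^{m-q,q} (zero if m < q) *)
Definition ZN (q m : nat) : subsp := fun x =>
  if (q <= m)%N then Nsp (m - q) q x /\ dtot x = czero else x = czero.
Definition BN (q m : nat) : subsp := fun x =>
  match m with
  | 0 => x = czero
  | m'.+1 => if (q <= m')%N then exists y, Nsp (m' - q) q y /\ dtot y = x
             else x = czero
  end.

Definition Msp (k : nat) : subsp := fun x =>
  deg k x /\ forall i j, i + j = k.+1 -> BN j k.+1 (comp i j (dtot x)).
Definition Zq (k q : nat) : subsp := fun xi =>
  exists x, Msp k x /\ proj q x = xi /\ proj q (dtot x) = czero.
Definition Bq (k q : nat) : subsp := fun xi =>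
  exists b, Bc k b /\ proj q b = xi.
Definition Asp (k : nat) : subsp := fun xi =>
  exists x, deg k x /\ proj 1 x = xi /\ proj 1 (dtot x) = czero.
Definition Jsp (k : nat) : subsp := capS (Asp k) (bideg k.-1 1).

(* ker(varrho_k), k >= 1: xi in J^k with rho_k(xi) = 0 in H^{k+1}(N_0),
   i.e. the representative d_{2,-1} xi_{k-1,1} + d_{1,0} eta_{k,0}
   (for an eta as in the definition of rho_k; the class does not depend on
   the choice) lies in B^{k+1}(N_0, dbar). *)
Definition ker_varrho (k : nat) : subsp := fun xi =>
  Jsp k xi /\
  exists x, deg k x /\ proj 1 x = xi /\ proj 1 (dtot x) = czero /\
    BN 0 k.+1 (cadd (D21 (comp k.-1 1 xi)) (D10 (comp k 0 x))).

Definition lin_on (S : subsp) (f : cochain -> cochain) :=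
  forall a x y, S x -> S y -> f (cadd (cscale a x) y) = cadd (cscale a (f x)) (f y).

(* S is isomorphic (as vector space) to the external direct sum
   A1 (+) A2 (+) A3 (+) A4, via x |-> (f1 x, f2 x, f3 x, f4 x). *)
Definition iso4 (S A1 A2 A3 A4 : subsp) :=
  exists f1 f2 f3 f4 : cochain -> cochain,
    [/\ lin_on S f1, lin_on S f2, lin_on S f3 & lin_on S f4] /\
    (forall x, S x -> [/\ A1 (f1 x), A2 (f2 x), A3 (f3 x) & A4 (f4 x)]) /\
    (forall x y, S x -> S y -> f1 x = f1 y -> f2 x = f2 y -> f3 x = f3 y ->
       f4 x = f4 y -> x = y) /\
    (forall a1 a2 a3 a4, A1 a1 -> A2 a2 -> A3 a3 -> A4 a4 ->
       exists x, [/\ S x, f1 x = a1, f2 x = a2, f3 x = a3 & f4 x = a4]).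

(* S/S' is isomorphic to (A1/B1) (+) (A2/B2) (+) (A3/B3) (+) (A4/B4):
   a linear map f = (f1,..,f4) from S to A1 (+) .. (+) A4, sending S' into
   B1 (+) .. (+) B4, whose induced map S/S' -> \oplus_i Ai/Bi is bijective. *)
Definition qiso4 (S S' A1 B1 A2 B2 A3 B3 A4 B4 : subsp) :=
  exists f1 f2 f3 f4 : cochain -> cochain,
    [/\ lin_on S f1, lin_on S f2, lin_on S f3 & lin_on S f4] /\
    (forall x, S x -> [/\ A1 (f1 x), A2 (f2 x), A3 (f3 x) & A4 (f4 x)]) /\
    (forall x, S x -> S' x -> [/\ B1 (f1 x), B2 (f2 x), B3 (f3 x) & B4 (f4 x)]) /\
    (forall x, S x -> B1 (f1 x) -> B2 (f2 x) -> B3 (f3 x) -> B4 (f4 x) -> S' x) /\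
    (forall a1 a2 a3 a4, A1 a1 -> A2 a2 -> A3 a3 -> A4 a4 ->
       exists x, [/\ S x, B1 (cadd (f1 x) (copp a1)), B2 (cadd (f2 x) (copp a2)),
                      B3 (cadd (f3 x) (copp a3)) & B4 (cadd (f4 x) (copp a4))]).

End Defs.

(* Main.v *)
From HB Require Import structures.
Require Import Defs.
From mathcomp Require Import all_boot all_order all_algebra.
From mathcomp Require Import boolp classical_sets.
From mathcomp Require Import zify.
Set Implicit Arguments. Unset Strict Implicit. Unset Printing Implicit Defensive.
Import GRing.Theory.
Local Open Scope ring_scope.

Section Generic.
Local Open Scope classical_set_scope.
Variables (R : fieldType) (V : lmodType R).
Implicit Types (P Q S K T U : V -> Prop).

Definition lc P := forall a x y, P x -> P y -> P (a *: x + y).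
Definition subsp' P := P 0 /\ lc P.

Lemma lcD P x y : lc P -> P x -> P y -> P (x + y).
Proof. by move=> h hx hy; have := h 1 x y hx hy; rewrite scale1r. Qed.
Lemma lcZ P a x : subsp' P -> P x -> P (a *: x).
Proof. by move=> [h0 h] hx; have := h a x 0 hx h0; rewrite addr0. Qed.
Lemma lcN P x : subsp' P -> P x -> P (- x).
Proof. by move=> h hx; have := lcZ (-1) h hx; rewrite scaleN1r. Qed.
Lemma lcB P x y : subsp' P -> P x -> P y -> P (x - y).
Proof. by move=> h hx hy; apply: lcD (h.2) hx (lcN h hy). Qed.

Lemma complement S K U0 : subsp' S -> subsp' K -> subsp' U0 ->
  (forall x, U0 x -> S x) -> (forall x, U0 x -> K x -> x = 0) ->
  exists A, [/\ subsp' A, (forall x, U0 x -> A x), (forall x, A x -> S x),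
    (forall x, A x -> K x -> x = 0) &
    (forall x, S x -> exists u k, [/\ A u, K k & x = u + k])].
Proof.
move=> hS hK hU U0S U0K.
pose PP := fun U : set V => [/\ (forall x, U x -> S x), lc U,
   (forall x, U x -> K x -> x = 0) & ((forall x, ~ U x) \/ (forall x, U0 x -> U x))].
have [A [[AS Alc AK Ae] Amax]] : exists A, PP A /\ forall B, A `<` B -> ~ PP B.
  apply: Zorn_bigcup => F FP Ftot; split.
  - by move=> x [X FX Xx]; case: (FP X FX) => + _ _ _; apply.
  - move=> a x y [X FX Xx] [Y FY Yy].
    case: (Ftot X Y FX FY) => [XY|YX].
      exists Y => //; case: (FP Y FY) => _ h _ _; apply: h => //; exact: XY.
    exists X => //; case: (FP X FX) => _ h _ _; apply: h => //; exact: YX.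
  - by move=> x [X FX Xx]; case: (FP X FX) => _ _ + _; apply.
  - case: (pselect (exists X x, F X /\ X x)) => [[X [x [FX Xx]]]|nE].
      right => z /= U0z; exists X => //.
      case: (FP X FX) => _ _ _ [/(_ x)//|]; by apply.
    left => x [X FX Xx]; apply: nE; by exists X, x.
have A0 : forall x, U0 x -> A x.
  case: Ae => [Aempty|//]; exfalso; apply: (Amax U0).
    split; first by move=> x /Aempty.
    by move=> /(_ 0 hU.1)/Aempty.
  split => //; [exact: hU.2 | by right].
have hA : subsp' A by split; [apply: A0; exact: hU.1 | exact: Alc].
exists A; split => // x Sx.
apply: contrapT => nD.
pose B := fun z => exists u c, A u /\ z = u + c *: x.
apply: (Amax B).
  split; first by move=> z Az; exists z, 0; rewrite scale0r addr0.
  move=> BA; have Ax : A x by apply: BA; exists 0, 1; split; [exact: hA.1 | rewrite scale1r add0r].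
  apply: nD; exists x, 0; split => //; [exact: hK.1 | by rewrite addr0].
split.
- move=> z [u [c [Au ->]]]; apply: lcD (hS.2) (AS _ Au) _; exact: lcZ.
- move=> a z1 z2 [u1 [c1 [Au1 ->]]] [u2 [c2 [Au2 ->]]].
  exists (a *: u1 + u2), (a * c1 + c2); split; first exact: Alc.
  by rewrite scalerDr scalerA addrACA -scalerDl.
- move=> z [u [c [Au ->]]] Kz.
  have [c0|cn0] := eqVneq c 0.
    by move: Kz; rewrite c0 scale0r addr0; apply: AK.
  exfalso; apply: nD; exists ((- c^-1) *: u), (c^-1 *: (u + c *: x)); split.
  + exact: lcZ.
  + exact: lcZ.
  + by rewrite scalerDr scalerA mulVf // scale1r scaleNr addrA addNr add0r.
- by right => z /A0 Az; exists z, 0; rewrite scale0r addr0.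
Qed.

Definition linS S (f : V -> V) := forall a x y, S x -> S y -> f (a *: x + y) = a *: f x + f y.
Definition glin (f : V -> V) := forall a x y, f (a *: x + y) = a *: f x + f y.

Lemma linS0 S f : subsp' S -> linS S f -> f 0 = 0.
Proof.
move=> hS hf; have := hf (-1) 0 0 hS.1 hS.1.
by rewrite scaler0 addr0 scaleN1r addNr.
Qed.
Lemma linSD S f x y : subsp' S -> linS S f -> S x -> S y -> f (x + y) = f x + f y.
Proof. by move=> hS hf hx hy; have := hf 1 x y hx hy; rewrite !scale1r. Qed.
Lemma linSZ S f a x : subsp' S -> linS S f -> S x -> f (a *: x) = a *: f x.
Proof.
move=> hS hf hx; have := hf a x 0 hx hS.1; rewrite !addr0 => ->.
by rewrite (linS0 hS hf) addr0.
Qed.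
Lemma linSN S f x : subsp' S -> linS S f -> S x -> f (- x) = - f x.
Proof. by move=> hS hf hx; rewrite -scaleN1r (linSZ _ hS hf hx) scaleN1r. Qed.
Lemma linSB S f x y : subsp' S -> linS S f -> S x -> S y -> f (x - y) = f x - f y.
Proof.
move=> hS hf hx hy; rewrite (linSD hS hf hx (lcN hS hy)) (linSN hS hf hy) //.
Qed.
Lemma glinS S f : glin f -> linS S f.
Proof. by move=> h a x y _ _; apply: h. Qed.
Lemma subspT : subsp' (fun _ => True).
Proof. by []. Qed.
Lemma glin0 f : glin f -> f 0 = 0.
Proof. by move=> h; apply: (linS0 subspT (glinS (S:=fun _ => True) h)). Qed.
Lemma glinB f x y : glin f -> f (x - y) = f x - f y.
Proof. by move=> h; apply: (linSB subspT (glinS (S:=fun _ => True) h)). Qed.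
Lemma glinD f x y : glin f -> f (x + y) = f x + f y.
Proof. by move=> h; apply: (linSD subspT (glinS (S:=fun _ => True) h)). Qed.

Lemma subspI P Q : subsp' P -> subsp' Q -> subsp' (fun x => P x /\ Q x).
Proof.
move=> [hP0 hP] [hQ0 hQ]; split=> // a x y [? ?] [? ?]; split; [exact: hP|exact: hQ].
Qed.

Lemma decomp_uniq A K u u' k k' : subsp' A -> subsp' K ->
  (forall z, A z -> K z -> z = 0) -> A u -> A u' -> K k -> K k' ->
  u + k = u' + k' -> k = k'.
Proof.
move=> hA hK AK Au Au' Kk Kk' E.
have e : u - u' = k' - k.
  by apply/eqP; rewrite subr_eq addrC addrA -E addrK.
have : k' - k = 0 by apply: AK; [rewrite -e; exact: lcB | exact: lcB].
by move/eqP; rewrite subr_eq0 => /eqP.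
Qed.

Lemma retraction S K T : subsp' S -> subsp' K -> subsp' T ->
  (forall x, K x -> S x) -> (forall x, T x -> S x) ->
  exists r, [/\ (forall x, S x -> K (r x)), (forall k, K k -> r k = k),
     linS S r & (forall t, T t -> T (r t))].
Proof.
move=> hS hK hT KS TS.
have h0 : subsp' (fun x : V => x = 0).
  by split=> // a x y -> ->; rewrite scaler0 addr0.
have [A0 [hA0 _ A0T A0K A0dec]] :=
  @complement T (fun x => T x /\ K x) (fun x => x = 0) hT (subspI hT hK) h0
    (fun x e => ltac:(by rewrite e; exact: hT.1)) (fun x e _ => e).
have [A [hA A0A AS AK Adec]] := @complement S K A0 hS hK hA0
  (fun x h => TS _ (A0T _ h)) (fun x h k => A0K x h (conj (A0T x h) k)).
have : forall x, exists k, K k /\ (S x -> A (x - k)).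
  move=> x; case: (pselect (S x)) => Sx.
    have [u [k [Au Kk ->]]] := Adec x Sx; exists k; split=> // _.
    by rewrite addrK.
  by exists 0; split=> //; exact: hK.1.
case/choice => r hr.
have rchar : forall x u k, A u -> K k -> x = u + k -> r x = k.
  move=> x u k Au Kk ex.
  have Sx : S x by rewrite ex; apply: lcD hS.2 (AS _ Au) (KS _ Kk).
  apply: (@decomp_uniq A K (x - r x) u) => //.
    exact: ((hr x).2 Sx). exact: (hr x).1.
  by rewrite subrK.
exists r; split.
- by move=> x _; exact: (hr x).1.
- by move=> k Kk; apply: (rchar k 0) => //; [exact: hA.1 | rewrite add0r].
- move=> a x y Sx Sy.
  apply: (rchar _ (a *: (x - r x) + (y - r y))).
  + by apply: hA.2; apply: (hr _).2.
  + by apply: hK.2; apply: (hr _).1.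
  + by rewrite scalerBr addrACA !subrK.
- move=> t Tt; have [u0 [k [A0u [Tk Kk] ->]]] := A0dec t Tt.
  by rewrite (rchar _ u0 k) //; apply: A0A.
Qed.

Definition level P Q (g : V -> V) A T B :=
  [/\ (forall x, P x -> A (g x)), (forall x, P x -> (g x = 0 <-> Q x)),
      (forall a, A a -> exists x, P x /\ g x = a),
      (forall x, T x -> P x -> B (g x)) &
      (forall b, B b -> exists x, [/\ T x, P x & g x = b])].

Definition retr P Q T r := [/\ (forall x, P x -> Q (r x)), (forall k, Q k -> r k = k),
     linS P r & (forall t, T t -> P t -> T (r t))].

Lemma get_retr P Q T : subsp' P -> subsp' Q -> subsp' T -> (forall x, Q x -> P x) ->
  exists r, retr P Q T r.
Proof.
move=> hP hQ hT QP.
have [r [h1 h2 h3 h4]] := @retraction P Q (fun x => T x /\ P x) hP hQ (subspI hT hP) QP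
   (fun x h => h.2).
by exists r; split=> // t Tt Pt; case: (h4 t (conj Tt Pt)).
Qed.

Lemma stepT P Q g A T B r : subsp' P -> subsp' T -> glin g -> level P Q g A T B ->
  retr P Q T r -> (forall x, Q x -> P x) ->
  forall x, P x -> B (g x) -> T (r x) -> T x.
Proof.
move=> hP hT hg [_ gker _ _ gB] [rQ rid rlin rT] QP x Px Bx Trx.
have [b [Tb Pb gb]] := gB _ Bx.
pose w := x - r x - b.
have Pw : P w by apply: lcB => //; apply: lcB => //; apply: QP; apply: rQ.
have gw : g w = 0.
  rewrite /w !glinB // gb (proj2 (gker _ (QP _ (rQ _ Px))) (rQ _ Px)).
  by rewrite subr0 subrr.
have Qw : Q w by apply/(gker _ Pw).
have ew : w = - r b.
  rewrite -{1}(rid _ Qw) /w (linSB hP rlin) //; last by apply: lcB => //; apply: QP; apply: rQ.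
  rewrite (linSB hP rlin) //; last by apply: QP; apply: rQ.
  by rewrite (rid _ (rQ _ Px)) subrr sub0r.
have Trb : T (r b) := rT b Tb Pb.
have Tw : T w by rewrite ew; exact: lcN hT Trb.
have -> : x = w + b + r x by rewrite /w !subrK.
by apply: lcD (hT.2) _ (Trx); apply: lcD (hT.2) (Tw) (Tb).
Qed.

Lemma master (S S1 S2 S3 T A1 A2 A3 A4 B1 B2 B3 B4 : V -> Prop) (g4 g3 g2 : V -> V) :
  subsp' S -> subsp' S1 -> subsp' S2 -> subsp' S3 -> subsp' T ->
  (forall x, S1 x -> S x) -> (forall x, S2 x -> S1 x) -> (forall x, S3 x -> S2 x) ->
  (forall x, T x -> S x) ->
  glin g4 -> glin g3 -> glin g2 ->
  level S S1 g4 A4 T B4 -> level S1 S2 g3 A3 T B3 -> level S2 S3 g2 A2 T B2 ->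
  (forall x, A1 x <-> S3 x) -> (forall x, B1 x <-> T x /\ S3 x) ->
  exists f1 f2 f3 f4 : V -> V,
   [/\ [/\ linS S f1, linS S f2, linS S f3 & linS S f4],
       (forall x, S x -> [/\ A1 (f1 x), A2 (f2 x), A3 (f3 x) & A4 (f4 x)]),
       (forall x y, S x -> S y -> f1 x = f1 y -> f2 x = f2 y -> f3 x = f3 y ->
          f4 x = f4 y -> x = y),
       (forall a1 a2 a3 a4, A1 a1 -> A2 a2 -> A3 a3 -> A4 a4 ->
          exists x, [/\ S x, f1 x = a1, f2 x = a2, f3 x = a3 & f4 x = a4]) &
       (forall x, T x -> [/\ B1 (f1 x), B2 (f2 x), B3 (f3 x) & B4 (f4 x)]) /\
       (forall x, S x -> B1 (f1 x) -> B2 (f2 x) -> B3 (f3 x) -> B4 (f4 x) -> T x)].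
Proof.
move=> hS hS1 hS2 hS3 hT S1S S2S1 S3S2 TS hg4 hg3 hg2 L4 L3 L2 A1E B1E.
have [r1 R1] := @get_retr S S1 T hS hS1 hT S1S.
have [r2 R2] := @get_retr S1 S2 T hS1 hS2 hT S2S1.
have [r3 R3] := @get_retr S2 S3 T hS2 hS3 hT S3S2.
move: (R1) (R2) (R3) => [r1Q r1id r1lin r1T] [r2Q r2id r2lin r2T] [r3Q r3id r3lin r3T].
move: (L4) (L3) (L2) => [g4A g4ker g4s g4B g4Bs] [g3A g3ker g3s g3B g3Bs] [g2A g2ker g2s g2B g2Bs].
have g4S1 : forall x, S1 x -> g4 x = 0 by move=> x h; apply/(g4ker _ (S1S _ h)).
have g3S2 : forall x, S2 x -> g3 x = 0 by move=> x h; apply/(g3ker _ (S2S1 _ h)).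
have g2S3 : forall x, S3 x -> g2 x = 0 by move=> x h; apply/(g2ker _ (S3S2 _ h)).
pose f4 := g4; pose f3 := fun x => g3 (r1 x); pose f2 := fun x => g2 (r2 (r1 x));
pose f1 := fun x => r3 (r2 (r1 x)).
have lin_comp : forall (P Q : V -> Prop) (f h : V -> V), linS P f -> (forall x, P x -> Q (f x)) ->
    linS Q h -> linS P (fun x => h (f x)).
  by move=> P Q f h hf hPQ hh a x y Px Py; rewrite hf // hh //; apply: hPQ.
have l1 : linS S (fun x => r2 (r1 x)) by exact: (lin_comp _ _ _ _ r1lin r1Q r2lin).
have lf1 : linS S f1.
  by apply: (lin_comp _ _ _ _ l1 _ r3lin) => x Sx; apply: r2Q; apply: r1Q.
have lf2 : linS S f2.
  by apply: (lin_comp _ _ _ _ l1 _ (glinS (S:=S2) hg2)) => x Sx; apply: r2Q; apply: r1Q.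
have lf3 : linS S f3 by exact: (lin_comp _ _ _ _ r1lin r1Q (glinS (S:=S1) hg3)).
have lf4 : linS S f4 by exact: glinS.
exists f1, f2, f3, f4; split.
- by split.
- move=> x Sx; split.
  + by apply/A1E; apply: r3Q; apply: r2Q; apply: r1Q.
  + by apply: g2A; apply: r2Q; apply: r1Q.
  + by apply: g3A; apply: r1Q.
  + exact: g4A.
- move=> x y Sx Sy e1 e2 e3 e4.
  have Sw : S (y - x) by apply: lcB.
  have dw : forall f, linS S f -> f x = f y -> f (y - x) = 0.
    by move=> f hf e; rewrite (linSB hS hf Sy Sx) e subrr.
  have S1w : S1 (y - x) by apply/(g4ker _ Sw); exact: dw _ lf4 e4.
  have S2w : S2 (y - x).
    by apply/(g3ker _ S1w); have := dw _ lf3 e3; rewrite /f3 /= r1id.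
  have S3w : S3 (y - x).
    by apply/(g2ker _ S2w); have := dw _ lf2 e2; rewrite /f2 /= r1id // r2id.
  have := dw _ lf1 e1; rewrite /f1 /= r1id // r2id // r3id //.
  by move/eqP; rewrite subr_eq0 eq_sym => /eqP.
- move=> a1 a2 a3 a4 A1a A2a A3a A4a.
  have [x4 [Sx4 gx4]] := g4s _ A4a.
  have [x3 [S1x3 gx3]] := g3s _ A3a.
  have [x2 [S2x2 gx2]] := g2s _ A2a.
  have S3a1 : S3 a1 by apply/A1E.
  pose y4 := x4 - r1 x4; pose y3 := x3 - r2 x3; pose y2 := x2 - r3 x2.
  have Sy4 : S y4 by apply: lcB => //; apply: S1S; apply: r1Q.
  have S1y3 : S1 y3 by apply: lcB => //; apply: S2S1; apply: r2Q.
  have S2y2 : S2 y2 by apply: lcB => //; apply: S3S2; apply: r3Q.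
  have r1y4 : r1 y4 = 0.
    rewrite /y4 (linSB hS r1lin) // ?(r1id _ (r1Q _ Sx4)) ?subrr //.
    by apply: S1S; apply: r1Q.
  have r2y3 : r2 y3 = 0.
    rewrite /y3 (linSB hS1 r2lin) // ?(r2id _ (r2Q _ S1x3)) ?subrr //.
    by apply: S2S1; apply: r2Q.
  have r3y2 : r3 y2 = 0.
    rewrite /y2 (linSB hS2 r3lin) // ?(r3id _ (r3Q _ S2x2)) ?subrr //.
    by apply: S3S2; apply: r3Q.
  have S2z : S2 (y2 + a1) by apply: lcD (hS2.2) S2y2 (S3S2 _ S3a1).
  have S1u : S1 (y3 + (y2 + a1)) by apply: lcD (hS1.2) S1y3 (S2S1 _ S2z).
  have e1 : r1 (y4 + (y3 + (y2 + a1))) = y3 + (y2 + a1).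
    by rewrite (linSD hS r1lin Sy4 (S1S _ S1u)) r1y4 add0r (r1id _ S1u).
  have e2 : r2 (y3 + (y2 + a1)) = y2 + a1.
    by rewrite (linSD hS1 r2lin S1y3 (S2S1 _ S2z)) r2y3 add0r (r2id _ S2z).
  exists (y4 + (y3 + (y2 + a1))); split.
  + exact: lcD (hS.2) Sy4 (S1S _ S1u).
  + rewrite /f1 /= e1 e2 (linSD hS2 r3lin S2y2 (S3S2 _ S3a1)) r3y2 add0r.
    exact: r3id.
  + rewrite /f2 /= e1 e2 glinD // (g2S3 _ S3a1) addr0 /y2 glinB // gx2.
    by rewrite (g2S3 _ (r3Q _ S2x2)) subr0.
  + rewrite /f3 /= e1 glinD // (g3S2 _ S2z) addr0 /y3 glinB // gx3.
    by rewrite (g3S2 _ (r2Q _ S1x3)) subr0.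
  + rewrite /f4 glinD // (g4S1 _ S1u) addr0 /y4 glinB // gx4.
    by rewrite (g4S1 _ (r1Q _ Sx4)) subr0.
- split.
 move=> x Tx; have Sx := TS _ Tx.
  have T1 : T (r1 x) /\ S1 (r1 x) by split; [exact: r1T | exact: r1Q].
  have T2 : T (r2 (r1 x)) /\ S2 (r2 (r1 x)) by split; [exact: r2T (proj1 T1) (proj2 T1) | exact: r2Q (proj2 T1)].
  split.
  + apply/B1E; split; [exact: r3T (proj1 T2) (proj2 T2) | exact: r3Q (proj2 T2)].
  + exact: g2B (proj1 T2) (proj2 T2).
  + exact: g3B (proj1 T1) (proj2 T1).
  + exact: g4B.
- move=> x Sx B1x B2x B3x B4x.
  have S1x := r1Q _ Sx; have S2x := r2Q _ S1x.
  apply: (stepT hS hT hg4 L4 R1 S1S Sx B4x).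
  apply: (stepT hS1 hT hg3 L3 R2 S2S1 S1x B3x).
  apply: (stepT hS2 hT hg2 L2 R3 S3S2 S2x B2x).
  by case/B1E: B1x.
Qed.
End Generic.


Section Conc.
Variables (R : fieldType) (K : bicx R).
Definition cV := cochain K.
HB.instance Definition _ := gen_eqMixin cV.
HB.instance Definition _ := gen_choiceMixin cV.

Lemma ceq (x y : cV) : (forall p q, x p q = y p q) -> x = y.
Proof. move=> h; apply: functional_extensionality_dep => p; apply: functional_extensionality_dep => q; exact: h. Qed.

Lemma caddA : associative (cadd K : cV -> cV -> cV).
Proof. by move=> x y z; apply: ceq => p q; rewrite /cadd addrA. Qed.
Lemma caddC : commutative (cadd K : cV -> cV -> cV).
Proof. by move=> x y; apply: ceq => p q; rewrite /cadd addrC. Qed.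
Lemma cadd0 : left_id (czero K : cV) (cadd K).
Proof. by move=> x; apply: ceq => p q; rewrite /cadd /czero add0r. Qed.
Lemma caddN : left_inverse (czero K : cV) (copp K) (cadd K).
Proof. by move=> x; apply: ceq => p q; rewrite /cadd /czero /copp addNr. Qed.
HB.instance Definition _ := GRing.isZmodule.Build cV caddA caddC cadd0 caddN.
Lemma cscaleA a b (v : cV) : cscale K a (cscale K b v) = cscale K (a * b) v.
Proof. by apply: ceq => p q; rewrite /cscale scalerA. Qed.
Lemma cscale1 : left_id 1 (cscale K : R -> cV -> cV).
Proof. by move=> x; apply: ceq => p q; rewrite /cscale scale1r. Qed.
Lemma cscaleDr : right_distributive (cscale K : R -> cV -> cV) +%R.
Proof. by move=> a x y; apply: ceq => p q; rewrite /cscale /= /cadd scalerDr. Qed.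
Lemma cscaleDl (v : cV) (a b : R) : cscale K (a + b) v = (cscale K a v : cV) + cscale K b v.
Proof. by apply: ceq => p q; rewrite /cscale /= /cadd scalerDl. Qed.
HB.instance Definition _ := GRing.Zmodule_isLmodule.Build R cV cscaleA cscale1 cscaleDr cscaleDl.

Lemma addE (x y : cV) : x + y = cadd K x y. Proof. by []. Qed.
Lemma scaleE a (x : cV) : a *: x = cscale K a x. Proof. by []. Qed.
Lemma zeroE : (0 : cV) = czero K. Proof. by []. Qed.
Lemma oppE (x : cV) : - x = copp K x. Proof. by []. Qed.
Lemma addA (x y : cV) p q : (x + y) p q = x p q + y p q. Proof. by []. Qed.
Lemma scaleA a (x : cV) p q : (a *: x) p q = a *: x p q. Proof. by []. Qed.
Lemma zeroA p q : (0 : cV) p q = 0. Proof. by []. Qed.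
Lemma oppA (x : cV) p q : (- x) p q = - x p q. Proof. by []. Qed.
End Conc.

Section S.
Variables (R : fieldType) (K : bicx R).
Local Notation V := (cV K).
Definition Dt (x : V) : V := dtot K x.
Definition Cm i j (x : V) : V := Defs.comp K i j x.
Definition E21 (x : V) : V := D21 K x.
Definition E10 (x : V) : V := D10 K x.
Definition E01 (x : V) : V := D01 K x.
Definition Pj q (x : V) : V := Defs.proj K q x.

Ltac cs p q := case: p => [|[|[|[|[|p]]]]]; case: q => [|[|[|[|[|q]]]]].

Lemma Cm_at i j (x : V) : Cm i j x i j = x i j.
Proof. by rewrite /Cm /Defs.comp !eqxx. Qed.
Lemma Cm_off i j (x : V) p q : (p, q) <> (i, j) -> Cm i j x p q = 0.
Proof.
rewrite /Cm /Defs.comp => h; case: eqP => [ep|//]; case: eqP => [eq|//].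
by exfalso; apply: h; rewrite ep eq.
Qed.
Lemma Cm_eq0 i j (x : V) : Cm i j x = 0 <-> x i j = 0.
Proof.
split=> [h|h]; first by rewrite -(Cm_at i j x) h.
apply: ceq => p q; rewrite zeroA.
have [[-> ->]|ne] := pselect ((p, q) = (i, j)); first by rewrite Cm_at.
exact: Cm_off.
Qed.
Lemma bideg_Cm i j (x : V) : bideg K i j (Cm i j x).
Proof. by move=> p q; apply: Cm_off. Qed.
Lemma Cm_bideg i j (y : V) : bideg K i j y -> Cm i j y = y.
Proof.
move=> h; apply: ceq => p q.
have [[-> ->]|ne] := pselect ((p, q) = (i, j)); first by rewrite Cm_at.
by rewrite Cm_off // h.
Qed.
Lemma Cm_bideg_off i j k l (y : V) : bideg K i j y -> (k, l) <> (i, j) -> Cm k l y = 0.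
Proof.
move=> h ne; apply/Cm_eq0; apply: h.
by move=> e; apply: ne; case: e => -> ->.
Qed.
Lemma bideg_deg i j (y : V) : bideg K i j y -> deg K (i + j) y.
Proof. by move=> h p q ne; apply: h => -[ep eq]; apply: ne; rewrite ep eq. Qed.
Lemma proj_Cm q i j (b a : V) : Pj q b = a -> bideg K i j a -> (q <= j)%N -> Cm i j b = a.
Proof.
move=> e ha hq; rewrite -(Cm_bideg ha); apply: ceq => p q'.
have [[-> ->]|ne] := pselect ((p, q') = (i, j)); last by rewrite !Cm_off.
by rewrite !Cm_at -e /Pj /Defs.proj hq.
Qed.
Lemma proj_zero q i j k l (b a : V) : Pj q b = a -> bideg K i j a -> (q <= l)%N ->
  (k, l) <> (i, j) -> b k l = 0.
Proof. by move=> e ha hq ne; have := ha k l ne; rewrite -e /Pj /Defs.proj hq. Qed.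
Lemma proj_Cm0 q i j (z : V) : Pj q z = 0 -> (q <= j)%N -> Cm i j z = 0.
Proof.
move=> e hq; apply/Cm_eq0.
by have := congr1 (fun w : V => w i j) e; rewrite /Pj /Defs.proj hq.
Qed.

Lemma glin_Cm i j : glin (Cm i j).
Proof.
move=> a x y; apply: ceq => p q; rewrite addA scaleA.
have [[-> ->]|ne] := pselect ((p, q) = (i, j)); first by rewrite !Cm_at addA scaleA.
by rewrite !Cm_off // scaler0 addr0.
Qed.

Lemma glin_E21 : glin E21.
Proof.
move=> a x y; apply: ceq => p q; rewrite addA scaleA; case: p => [|[|p]] /=.
- by rewrite scaler0 addr0.
- by rewrite scaler0 addr0.
- rewrite addA scaleA; exact: linearP.
Qed.
Lemma glin_E10 : glin E10.
Proof.
move=> a x y; apply: ceq => p q; rewrite addA scaleA; case: p => [|p] /=.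
- by rewrite scaler0 addr0.
- rewrite addA scaleA; exact: linearP.
Qed.
Lemma glin_E01 : glin E01.
Proof.
move=> a x y; apply: ceq => p q; rewrite addA scaleA; case: q => [|q] /=.
- by rewrite scaler0 addr0.
- rewrite addA scaleA; exact: linearP.
Qed.
Lemma DtE (x : V) : Dt x = E21 x + (E10 x + E01 x).
Proof. by []. Qed.
Lemma glin_Dt : glin Dt.
Proof.
move=> a x y; rewrite !DtE glin_E21 glin_E10 glin_E01.
by rewrite !scalerDr (addrACA (a *: E10 x)) (addrACA (a *: E21 x)).
Qed.

Lemma deg_sub k : subsp' (deg K k : V -> Prop).
Proof.
split; first by move=> p q _; rewrite zeroA.
move=> a x y hx hy p q ne; by rewrite addA scaleA hx // hy // scaler0 addr0.
Qed.

Lemma deg_Dt k (x : V) : deg K k x -> deg K k.+1 (Dt x).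
Proof.
move=> hx p q ne; rewrite DtE !addA.
have e21 : E21 x p q = 0.
  rewrite /E21; case: (p) ne => [|[|p0]] ne //=; rewrite hx ?linear0 //; lia.
have e10 : E10 x p q = 0.
  rewrite /E10; case: (p) ne => [|p0] ne //=; rewrite hx ?linear0 //; lia.
have e01 : E01 x p q = 0.
  rewrite /E01; case: (q) ne => [|q0] ne //=; rewrite hx ?linear0 //; lia.
by rewrite e21 e10 e01 !addr0.
Qed.

Ltac degz hx := rewrite hx //; lia.

Lemma proj3E (x : V) : deg K 3 x -> Pj 3 x = Cm 0 3 x.
Proof.
move=> hx; apply: ceq => p q; rewrite /Pj /Cm /Defs.proj /Defs.comp.
cs p q => //=; by [|degz hx].
Qed.
Lemma proj2E (x : V) : deg K 3 x -> x 0%N 3%N = 0 -> Pj 2 x = Cm 1 2 x.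
Proof.
move=> hx h; apply: ceq => p q; rewrite /Pj /Cm /Defs.proj /Defs.comp.
cs p q => //=; by [|degz hx].
Qed.
Lemma proj1E (x : V) : deg K 3 x -> x 0%N 3%N = 0 -> x 1%N 2%N = 0 -> Pj 1 x = Cm 2 1 x.
Proof.
move=> hx h h'; apply: ceq => p q; rewrite /Pj /Cm /Defs.proj /Defs.comp.
cs p q => //=; by [|degz hx].
Qed.
Lemma deg3_bideg30 (x : V) : deg K 3 x -> x 0%N 3%N = 0 -> x 1%N 2%N = 0 -> x 2%N 1%N = 0 ->
  bideg K 3 0 x.
Proof.
move=> hx h1 h2 h3 p q ne.
move: ne; cs p q => //= ne; by [|degz hx].
Qed.
Lemma deg4E (z : V) : deg K 4 z ->
  z = Cm 4 0 z + Cm 3 1 z + Cm 2 2 z + Cm 1 3 z + Cm 0 4 z.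
Proof.
move=> hz; apply: ceq => p q; rewrite !addA /Cm /Defs.comp.
cs p q => /=; rewrite ?addr0 ?add0r //; degz hz.
Qed.

Lemma LC (y : V) : Cm 0 3 (Dt y) = E01 (Cm 0 2 y).
Proof.
apply: ceq => p q; rewrite /Cm /Defs.comp /E01 /D01.
cs p q => /=; rewrite ?linear0 //.
all: rewrite DtE !addA /E21 /E10 /E01 /= ?add0r //.
Qed.
Lemma KEY (x : V) : Cm 4 0 (Dt x) = E21 (Cm 2 1 (Pj 1 x)) + E10 (Cm 3 0 x).
Proof.
apply: ceq => p q; rewrite addA /Cm /Defs.comp /E21 /E10 /D21 /D10.
cs p q => /=; rewrite ?linear0 ?addr0 //.
rewrite DtE !addA /E21 /E10 /E01 /= addr0 //.
Qed.

Lemma Pj0 q : Pj q 0 = 0.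
Proof. apply: ceq => p q'; rewrite /Pj /Defs.proj zeroA; by case: ifP. Qed.

Lemma BN0 j m : BN K j m (czero K).
Proof.
case: m => [|m] //=; case: ifP => // _.
exists (0 : V); split; last exact: (glin0 glin_Dt).
split; first by move=> p q _.
split; [exact: (glin0 glin_E01) | exact: (glin0 glin_E21)].
Qed.


Lemma coc_M (x : V) : Zc K 3 x -> Msp K 3 x.
Proof.
move=> [hx hd]; split=> // i j _.
have -> : Defs.comp K i j (dtot K x) = czero K.
  by have := glin0 (glin_Cm i j); rewrite /Cm => e; rewrite hd e.
exact: BN0.
Qed.

Definition F1 (S : V -> Prop) (x : V) := S x /\ x 0%N 3%N = 0.
Definition F2 (S : V -> Prop) (x : V) := F1 S x /\ x 1%N 2%N = 0.
Definition F3 (S : V -> Prop) (x : V) := F2 S x /\ x 2%N 1%N = 0.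

Lemma subsp_at i j : subsp' (fun x : V => x i j = 0).
Proof.
split; first by rewrite zeroA.
by move=> a x y hx hy; rewrite addA scaleA hx hy scaler0 addr0.
Qed.
Lemma subspF1 S : subsp' S -> subsp' (F1 S).
Proof. by move=> h; apply: subspI h (subsp_at 0 3). Qed.
Lemma subspF2 S : subsp' S -> subsp' (F2 S).
Proof. by move=> h; apply: subspI (subspF1 h) (subsp_at 1 2). Qed.
Lemma subspF3 S : subsp' S -> subsp' (F3 S).
Proof. by move=> h; apply: subspI (subspF2 h) (subsp_at 2 1). Qed.

Lemma subspBc : subsp' (Bc K 3 : V -> Prop).
Proof.
split.
  exists (0 : V); split; first exact: (deg_sub 2).1.
  exact: (glin0 glin_Dt).
move=> a x y [x' [hx' <-]] [y' [hy' <-]].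
exists (a *: (x' : V) + y'); split; first exact: (deg_sub 2).2.
exact: glin_Dt.
Qed.
Lemma subspZc : subsp' (Zc K 3 : V -> Prop).
Proof.
have h2 : subsp' (fun x : V => Dt x = 0).
  split; first exact: (glin0 glin_Dt).
  by move=> a x y hx hy; rewrite glin_Dt hx hy scaler0 addr0.
exact: (subspI (deg_sub 3) h2).
Qed.
Lemma Bc_deg (x : V) : Bc K 3 x -> deg K 3 x.
Proof. by move=> [y [hy <-]]; apply: deg_Dt. Qed.
Lemma Bc_Zc (hdd : forall k (x : cochain K), deg K k x -> dtot K (dtot K x) = czero K)
  (x : V) : Bc K 3 x -> Zc K 3 x.
Proof.
move=> hb; split; first exact: Bc_deg.
by case: hb => y [hy <-]; apply: hdd hy.
Qed.

Lemma B4a (x : V) : Bc K 3 x -> B0 K 3 (Cm 0 3 x).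
Proof.
move=> [y [hy <-]]; exists (Cm 0 2 y); split; first exact: bideg_Cm.
exact: (esym (LC y)).
Qed.
Lemma B4c (a : V) : B0 K 3 a -> exists x : V, Bc K 3 x /\ Cm 0 3 x = a.
Proof.
move=> [y [hy <-]]; exists (Dt y); split.
  by exists y; split=> //; exact: (bideg_deg hy).
by rewrite LC Cm_bideg.
Qed.
Lemma B3a (x : V) : F1 (Bc K 3) x -> capS K (Bq K 3 2) (bideg K 1 2) (Cm 1 2 x).
Proof.
move=> [hb h0]; split; last exact: bideg_Cm.
by exists x; split=> //; exact: (proj2E (Bc_deg hb) h0).
Qed.
Lemma B3c (a : V) : capS K (Bq K 3 2) (bideg K 1 2) a ->
  exists x : V, F1 (Bc K 3) x /\ Cm 1 2 x = a.
Proof.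
move=> [[b [hb hp]] ha]; exists b; split; last exact: (proj_Cm (q:=2) hp ha).
by split=> //; apply: (proj_zero (q:=2) hp ha).
Qed.
Lemma B2a (x : V) : F2 (Bc K 3) x -> capS K (Bq K 3 1) (bideg K 2 1) (Cm 2 1 x).
Proof.
move=> [[hb h0] h1]; split; last exact: bideg_Cm.
by exists x; split=> //; exact: (proj1E (Bc_deg hb) h0 h1).
Qed.
Lemma B2c (a : V) : capS K (Bq K 3 1) (bideg K 2 1) a ->
  exists x : V, F2 (Bc K 3) x /\ Cm 2 1 x = a.
Proof.
move=> [[b [hb hp]] ha]; exists b; split; last exact: (proj_Cm (q:=1) hp ha).
by split; [split=> // |]; apply: (proj_zero (q:=1) hp ha).
Qed.
Lemma B1E (x : V) : capS K (Bc K 3) (bideg K 3 0) x <-> F3 (Bc K 3) x.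
Proof.
split.
  by move=> [hb hd]; split; [split; [split=> // |] |]; apply: hd.
move=> [[[hb h0] h1] h2]; split=> //.
exact: (deg3_bideg30 (Bc_deg hb)).
Qed.

Lemma DtB (x y : V) : Dt (x - y) = Dt x - Dt y. Proof. exact: glinB glin_Dt. Qed.
Lemma DtD (x y : V) : Dt (x + y) = Dt x + Dt y. Proof. exact: glinD glin_Dt. Qed.
Lemma CmB i j (x y : V) : Cm i j (x - y) = Cm i j x - Cm i j y. Proof. exact: glinB (glin_Cm i j). Qed.
Lemma CmD i j (x y : V) : Cm i j (x + y) = Cm i j x + Cm i j y. Proof. exact: glinD (glin_Cm i j). Qed.

Lemma M_y (x : V) i j : Msp K 3 x -> (i + j = 4)%N -> (j <= 3)%N ->
  exists y : V, Nsp K (3 - j) j y /\ Dt y = Cm i j (Dt x).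
Proof. by case=> _ hM e hj; have := hM i j e; rewrite /BN /= hj. Qed.

Lemma Z4a (x : V) : Zc K 3 x -> Zq K 3 3 (Cm 0 3 x).
Proof.
move=> hz; exists x; split; first exact: coc_M.
split; first exact: (proj3E hz.1).
by case: hz => _ hd; have := Pj0 3; rewrite /Pj => e; rewrite hd e.
Qed.

Lemma Z4c (a : V) : Zq K 3 3 a -> exists x : V, Zc K 3 x /\ Cm 0 3 x = a.
Proof.
case=> x' [hM [hp hpd]].
have hdx : deg K 3 x' := hM.1.
have [y0 [N0 e0]] := M_y (i:=4) (j:=0) hM erefl erefl.
have [y1 [N1 e1]] := M_y (i:=3) (j:=1) hM erefl erefl.
have [y2 [N2 e2]] := M_y (i:=2) (j:=2) hM erefl erefl.
have d0 : deg K 3 y0 := bideg_deg N0.1.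
have d1 : deg K 3 y1 := bideg_deg N1.1.
have d2 : deg K 3 y2 := bideg_deg N2.1.
have E : Dt x' = Cm 4 0 (Dt x') + Cm 3 1 (Dt x') + Cm 2 2 (Dt x').
  rewrite {1}(deg4E (deg_Dt hdx)) (proj_Cm0 1 (j:=3) hpd) //.
  by rewrite (proj_Cm0 0 (j:=4) hpd) // !addr0.
exists ((x' : V) - (y0 + y1 + y2)); split.
  split.
    apply: (lcB (deg_sub 3)) => //; apply: lcD (deg_sub 3).2 _ d2.
    exact: lcD (deg_sub 3).2 d0 d1.
  change (Dt ((x' : V) - (y0 + y1 + y2)) = 0).
  by rewrite DtB !DtD e0 e1 e2 -E subrr.
rewrite CmB !CmD (Cm_bideg_off N0.1) // (Cm_bideg_off N1.1) // (Cm_bideg_off N2.1) //.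
by rewrite !addr0 subr0 -(proj3E hdx).
Qed.

Lemma Dt_zero_proj q (x : V) : Zc K 3 x -> Defs.proj K q (dtot K x) = czero K.
Proof. by case=> _ hd; have := Pj0 q; rewrite /Pj => e; rewrite hd e. Qed.

Lemma Z3a (x : V) : F1 (Zc K 3) x -> capS K (Zq K 3 2) (bideg K 1 2) (Cm 1 2 x).
Proof.
move=> [hz h0]; split; last exact: bideg_Cm.
exists x; split; first exact: coc_M.
split; first exact: (proj2E hz.1 h0).
exact: Dt_zero_proj.
Qed.

Lemma Z3c (a : V) : capS K (Zq K 3 2) (bideg K 1 2) a ->
  exists x : V, F1 (Zc K 3) x /\ Cm 1 2 x = a.
Proof.
case=> -[x' [hM [hp hpd]]] ha.
have hdx : deg K 3 x' := hM.1.
have [y0 [N0 e0]] := M_y (i:=4) (j:=0) hM erefl erefl.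
have [y1 [N1 e1]] := M_y (i:=3) (j:=1) hM erefl erefl.
have d0 : deg K 3 y0 := bideg_deg N0.1.
have d1 : deg K 3 y1 := bideg_deg N1.1.
have E : Dt x' = Cm 4 0 (Dt x') + Cm 3 1 (Dt x').
  rewrite {1}(deg4E (deg_Dt hdx)) (proj_Cm0 2 (j:=2) hpd) //.
  rewrite (proj_Cm0 1 (j:=3) hpd) //.
  by rewrite (proj_Cm0 0 (j:=4) hpd) // !addr0.
exists ((x' : V) - (y0 + y1)); split; last first.
  rewrite CmB !CmD (Cm_bideg_off N0.1) // (Cm_bideg_off N1.1) //.
  by rewrite !addr0 subr0 (proj_Cm (q:=2) hp ha).
split; last first.
  rewrite addA oppA addA (N0.1 0%N 3%N) // (N1.1 0%N 3%N) //.
  by rewrite (proj_zero (q:=2) hp ha) // addr0 oppr0 addr0.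
split.
  apply: (lcB (deg_sub 3)) => //; exact: lcD (deg_sub 3).2 d0 d1.
change (Dt ((x' : V) - (y0 + y1)) = 0).
by rewrite DtB !DtD e0 e1 -E subrr.
Qed.

Lemma Z2a (x : V) : F2 (Zc K 3) x -> ker_varrho K 3 (Cm 2 1 x).
Proof.
move=> [[hz h0] h1].
have hp : Pj 1 x = Cm 2 1 x := proj1E hz.1 h0 h1.
have hpd := Dt_zero_proj 1 hz.
split.
  split; last exact: bideg_Cm.
  by exists x; split; [exact: hz.1 | split].
exists x; split; first exact: hz.1.
split=> //; split=> //.
have E : E21 (Cm 2 1 (Cm 2 1 x)) + E10 (Cm 3 0 x) = 0.
  rewrite -hp -KEY; case: hz => _ hd.
  by have := glin0 (glin_Cm 4 0); rewrite /Cm => e; rewrite /Dt hd e.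
change (BN K 0 4 (E21 (Cm 2 1 (Cm 2 1 x)) + E10 (Cm 3 0 x))).
rewrite E; exact: BN0.
Qed.

Lemma Z2c (a : V) : ker_varrho K 3 a -> exists x : V, F2 (Zc K 3) x /\ Cm 2 1 x = a.
Proof.
case=> -[_ ha] [x [hdx [hp [hpd hB]]]].
have ha' : bideg K 2 1 a := ha.
move: hB; rewrite /BN /= => -[y [Ny ey]].
have dy : deg K 3 y := bideg_deg Ny.1.
have E : Dt x = Cm 4 0 (Dt x).
  rewrite {1}(deg4E (deg_Dt hdx)) (proj_Cm0 3 (q:=1) (j:=1) hpd) //.
  rewrite (proj_Cm0 2 (j:=2) hpd) // (proj_Cm0 1 (j:=3) hpd) //.
  by rewrite (proj_Cm0 0 (j:=4) hpd) // !addr0.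
exists ((x : V) - (y : V)); split; last first.
  rewrite CmB (Cm_bideg_off Ny.1) //.
  by rewrite subr0 (proj_Cm (q:=1) hp ha').
split; last first.
  rewrite addA oppA (Ny.1 1%N 2%N) //.
  by rewrite (proj_zero (q:=1) hp ha') // oppr0 addr0.
split; last first.
  rewrite addA oppA (Ny.1 0%N 3%N) //.
  by rewrite (proj_zero (q:=1) hp ha') // oppr0 addr0.
split.
  exact: (lcB (deg_sub 3)).
change (Dt ((x : V) - (y : V)) = 0).
have hp' : Pj 1 x = a := hp.
rewrite DtB E KEY hp'.
have -> : Dt y = E21 (Cm 2 1 a) + E10 (Cm 3 0 x) := ey.
by rewrite subrr.
Qed.

Lemma Z1E (x : V) : ZN K 0 3 x <-> F3 (Zc K 3) x.
Proof.
rewrite /ZN /=; split.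
  move=> [[hb _] hd].
  have hb' : bideg K 3 0 x := hb.
  by split; [split; [split; [split; [exact: (bideg_deg hb') | exact: hd] |] |] |]; apply: hb'.
move=> [[[[hdx hd] h0] h1] h2].
have hb := deg3_bideg30 hdx h0 h1 h2.
split=> //; split=> //; split.
  apply: ceq => p q; rewrite /czero /D01; case: q => [|q] //=.
  have [[-> ->]|ne] := pselect ((p, q) = (3%N, 0%N)); last first.
    by rewrite hb ?linear0.
  have := congr1 (fun w : V => w 3%N 1%N) hd.
  by rewrite /dtot /cadd /D21 /D10 /D01 /czero /= h1 h2 !linear0 !add0r.
apply: ceq => p q; rewrite /czero /D21; case: p => [|[|p]] //=.
by rewrite hb ?linear0.
Qed.

Lemma levB4 : level (Bc K 3 : V -> Prop) (F1 (Bc K 3)) (Cm 0 3) (B0 K 3) (Bc K 3) (B0 K 3).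
Proof.
split.
- exact: B4a.
- by move=> x hx; rewrite Cm_eq0; split=> [h|[]//]; split.
- by move=> a /B4c [x [hx e]]; exists x.
- by move=> x hx _; exact: B4a.
- by move=> b /B4c [x [hx e]]; exists x.
Qed.
Lemma levB3 : level (F1 (Bc K 3)) (F2 (Bc K 3)) (Cm 1 2)
   (capS K (Bq K 3 2) (bideg K 1 2)) (Bc K 3) (capS K (Bq K 3 2) (bideg K 1 2)).
Proof.
split.
- exact: B3a.
- by move=> x hx; rewrite Cm_eq0; split=> [h|[]//]; split.
- by move=> a /B3c [x [hx e]]; exists x.
- by move=> x _ hx; exact: B3a.
- by move=> b /B3c [x [hx e]]; exists x; split=> //; case: hx.
Qed.
Lemma levB2 : level (F2 (Bc K 3)) (F3 (Bc K 3)) (Cm 2 1)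
   (capS K (Bq K 3 1) (bideg K 2 1)) (Bc K 3) (capS K (Bq K 3 1) (bideg K 2 1)).
Proof.
split.
- exact: B2a.
- by move=> x hx; rewrite Cm_eq0; split=> [h|[]//]; split.
- by move=> a /B2c [x [hx e]]; exists x.
- by move=> x _ hx; exact: B2a.
- by move=> b /B2c [x [hx e]]; exists x; split=> //; case: hx => -[].
Qed.

Variable hdd : forall k (x : cochain K), deg K k x -> dtot K (dtot K x) = czero K.

Lemma levZ4 : level (Zc K 3 : V -> Prop) (F1 (Zc K 3)) (Cm 0 3) (Zq K 3 3) (Bc K 3) (B0 K 3).
Proof.
split.
- exact: Z4a.
- by move=> x hx; rewrite Cm_eq0; split=> [h|[]//]; split.
- by move=> a /Z4c [x [hx e]]; exists x.
- by move=> x hx _; exact: B4a.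
- by move=> b /B4c [x [hx e]]; exists x; split=> //; apply: Bc_Zc.
Qed.
Lemma levZ3 : level (F1 (Zc K 3)) (F2 (Zc K 3)) (Cm 1 2)
   (capS K (Zq K 3 2) (bideg K 1 2)) (Bc K 3) (capS K (Bq K 3 2) (bideg K 1 2)).
Proof.
split.
- exact: Z3a.
- by move=> x hx; rewrite Cm_eq0; split=> [h|[]//]; split.
- by move=> a /Z3c [x [hx e]]; exists x.
- by move=> x hb hx; apply: B3a; split=> //; case: hx.
- move=> b /B3c [x [[hb h0] e]]; exists x; split=> //.
  by split=> //; apply: Bc_Zc.
Qed.
Lemma levZ2 : level (F2 (Zc K 3)) (F3 (Zc K 3)) (Cm 2 1)
   (ker_varrho K 3) (Bc K 3) (capS K (Bq K 3 1) (bideg K 2 1)).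
Proof.
split.
- exact: Z2a.
- by move=> x hx; rewrite Cm_eq0; split=> [h|[]//]; split.
- by move=> a /Z2c [x [hx e]]; exists x.
- by move=> x hb [[hz h0] h1]; apply: B2a; split=> //; split.
- move=> b /B2c [x [[[hb h0] h1] e]]; exists x; split=> //.
  by split=> //; split=> //; apply: Bc_Zc.
Qed.
End S.


Theorem corollary5p8 (R : fieldType) (K : bicx R)
  (hdd : forall k (x : cochain K), deg K k x -> dtot K (dtot K x) = czero K) :
  iso4 K (Bc K 3) (capS K (Bc K 3) (bideg K 3 0)) (capS K (Bq K 3 1) (bideg K 2 1))
       (capS K (Bq K 3 2) (bideg K 1 2)) (B0 K 3)
  /\
  iso4 K (Zc K 3) (ZN K 0 3) (ker_varrho K 3) (capS K (Zq K 3 2) (bideg K 1 2)) (Zq K 3 3)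
  /\
  qiso4 K (Zc K 3) (Bc K 3)
        (ZN K 0 3) (capS K (Bc K 3) (bideg K 3 0))
        (ker_varrho K 3) (capS K (Bq K 3 1) (bideg K 2 1))
        (capS K (Zq K 3 2) (bideg K 1 2)) (capS K (Bq K 3 2) (bideg K 1 2))
        (Zq K 3 3) (B0 K 3).
Proof.
have hB := subspBc K; have hZ := subspZc K.
have B1Bc : forall x : cV K, capS K (Bc K 3) (bideg K 3 0) x <-> Bc K 3 x /\ F3 (Bc K 3) x.
  move=> x; apply: iff_trans (B1E x) _; split; last by case.
  by move=> h; split=> //; case: h => -[[]].
have [f1 [f2 [f3 [f4 [lin into inj surj _]]]]] :=
  @master R (cV K) (Bc K 3) (F1 (Bc K 3)) (F2 (Bc K 3)) (F3 (Bc K 3)) (Bc K 3)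
    (capS K (Bc K 3) (bideg K 3 0)) (capS K (Bq K 3 1) (bideg K 2 1))
    (capS K (Bq K 3 2) (bideg K 1 2)) (B0 K 3)
    (capS K (Bc K 3) (bideg K 3 0)) (capS K (Bq K 3 1) (bideg K 2 1))
    (capS K (Bq K 3 2) (bideg K 1 2)) (B0 K 3)
    (Cm 0 3) (Cm 1 2) (Cm 2 1) hB (subspF1 hB) (subspF2 hB) (subspF3 hB) hB
    (fun x h => h.1) (fun x h => h.1) (fun x h => h.1) (fun x h => h)
    (glin_Cm 0 3) (glin_Cm 1 2) (glin_Cm 2 1) (levB4 K) (levB3 K) (levB2 K)
    (@B1E R K) B1Bc.
have B1Zc : forall x : cV K, capS K (Bc K 3) (bideg K 3 0) x <-> Bc K 3 x /\ F3 (Zc K 3) x.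
  move=> x; apply: iff_trans (B1E x) _; split.
    by move=> [[[hb h0] h1] h2]; split=> //; split=> //; split=> //; split=> //; exact: Bc_Zc.
  by move=> [hb [[[_ h0] h1] h2]].
have [g1 [g2 [g3 [g4 [lin' into' inj' surj' [Tpart refl]]]]]] :=
  @master R (cV K) (Zc K 3) (F1 (Zc K 3)) (F2 (Zc K 3)) (F3 (Zc K 3)) (Bc K 3)
    (ZN K 0 3) (ker_varrho K 3) (capS K (Zq K 3 2) (bideg K 1 2)) (Zq K 3 3)
    (capS K (Bc K 3) (bideg K 3 0)) (capS K (Bq K 3 1) (bideg K 2 1))
    (capS K (Bq K 3 2) (bideg K 1 2)) (B0 K 3)
    (Cm 0 3) (Cm 1 2) (Cm 2 1) hZ (subspF1 hZ) (subspF2 hZ) (subspF3 hZ) hB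
    (fun x h => h.1) (fun x h => h.1) (fun x h => h.1) (Bc_Zc hdd)
    (glin_Cm 0 3) (glin_Cm 1 2) (glin_Cm 2 1) (levZ4 hdd) (levZ3 hdd) (levZ2 hdd)
    (@Z1E R K) B1Zc.
split; first by exists f1, f2, f3, f4.
split; first by exists g1, g2, g3, g4.
exists g1, g2, g3, g4; split=> //; split=> //; split.
  by move=> x _ hb; apply: Tpart.
split=> //.
move=> a1 a2 a3 a4 h1 h2 h3 h4.
have [x [Sx e1 e2 e3 e4]] := surj' a1 a2 a3 a4 h1 h2 h3 h4.
have [T1 T2 T3 T4] := Tpart (0 : cV K) hB.1.
case: lin' => l1 l2 l3 l4.
exists x; split=> //.
- change (capS K (Bc K 3) (bideg K 3 0) (g1 x - (a1 : cV K))); rewrite e1 subrr -(linS0 hZ l1); exact: T1.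
- change (capS K (Bq K 3 1) (bideg K 2 1) (g2 x - (a2 : cV K))); rewrite e2 subrr -(linS0 hZ l2); exact: T2.
- change (capS K (Bq K 3 2) (bideg K 1 2) (g3 x - (a3 : cV K))); rewrite e3 subrr -(linS0 hZ l3); exact: T3.
- change (B0 K 3 (g4 x - (a4 : cV K))); rewrite e4 subrr -(linS0 hZ l4); exact: T4.
Qed.
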